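(* Let $t,t':V\to\mathbb{R}_{\ge0}$ be fingerprints with $t_v\le t'_v$ for all $v\in V$. If two vertices $u,v$ are actively connected in shadow moat growing on $(G,t)$, then they are actively connected in shadow moat growing on $(G,t')$.
   Context: $G=(V,E,c)$ is an undirected graph with edge costs $c:E\to\mathbb{R}_{\ge0}$; $\delta(S)$ denotes the edges with exactly one endpoint in $S$. Shadow moat growing on $(G,t)$: a continuous process in time $\tau\ge0$ maintaining a forest $F$ (initially empty), the components of $(V,F)$, and values $y_S\ge0$ (initially $0$). At time $\tau$ a component $C$ is active iff it contains $w$ with $t_w>\tau$; each active component $C$ increases $y_C$ at rate $1$. When an edge $e$ between different components satisfies $\sum_{S:e\in\delta(S)}y_S=c_e$ it is added to $F$ and the components merge (ties processed one at a time by a fixed rule). The process stops when no component is active. Vertices $u,v$ are actively connected in a run if there is a time $\tau$ such that $u$ and $v$ lie in a common component at time $\tau$ and, for every $\tau'\in[0,\tau)$, the components containing $u$ and containing $v$ at time $\tau'$ are both active (i.e., both remain in active components from the start until they become connected). *)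

(* Defs.v *)
From HB Require Import structures.
From mathcomp Require Import all_boot all_order all_algebra.
From mathcomp Require Import reals.
Set Implicit Arguments. Unset Strict Implicit. Unset Printing Implicit Defensive.
Import Order.TTheory GRing.Theory Num.Theory.
Local Open Scope ring_scope.

(* A run of shadow moat growing is recorded as the finite sequence of its
   merge events (tau_k, (u_k, v_k)) in processing order: at time tau_k the
   edge u_k v_k is added to F. *)

Section ShadowMoat.
Variables (R : realType) (V : finType).

Definition event := (R * (V * V))%type.

Definition frel (F : seq (V * V)) : rel V :=
  fun x y => ((x, y) \in F) || ((y, x) \in F).

Definition comp (F : seq (V * V)) (x : V) : {set V} :=
  [set y | connect (frel F) x y].

Definition is_comp (F : seq (V * V)) (S : {set V}) : bool :=
  [exists x, S == comp F x].

Definition forest_at (ev : seq event) (i : nat) : seq (V * V) :=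
  map snd (take i ev).

(* number of events processed by time tau (inclusive: state "at time tau"
   is the state after all merges happening at tau) *)
Definition n_at (ev : seq event) (tau : R) : nat :=
  count (fun p : event => p.1 <= tau) ev.

Definition F_at (ev : seq event) (tau : R) : seq (V * V) :=
  forest_at ev (n_at ev tau).

(* the forest F_i (after i events) is in force on [start i, end_ i) *)
Definition start (ev : seq event) (i : nat) : R :=
  if i is j.+1 then nth 0 (map fst ev) j else 0.
Definition end_ (ev : seq event) (i : nat) (tau : R) : R :=
  if (i < size ev)%N then nth 0 (map fst ev) i else tau.

Variable t : V -> R.

(* S is active at time s iff s < max_{w in S} t_w *)
Definition Tmax (S : {set V}) : R := \big[Num.max/0]_(w in S) t w.

(* y_S at time tau: the measure of the set of times s in [0,tau) at which
   S is an active component. *)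
Definition yval (ev : seq event) (S : {set V}) (tau : R) : R :=
  \sum_(i < (size ev).+1)
     (if is_comp (forest_at ev i) S
      then Num.max 0 (Num.min (Num.min (end_ ev i tau) tau) (Tmax S)
                      - start ev i)
      else 0).

Definition load (ev : seq event) (u v : V) (tau : R) : R :=
  \sum_(S : {set V}) (if (u \in S) != (v \in S) then yval ev S tau else 0).

Definition active (F : seq (V * V)) (tau : R) (x : V) : bool :=
  [exists w in comp F x, tau < t w].

Variables (adj : rel V) (c : V -> V -> R).

(* ev is the (complete) run of shadow moat growing on (G, t), for some
   tie-breaking order. *)
Definition is_run (ev : seq event) : Prop :=
  [/\ (forall p, p \in ev -> 0 <= p.1),
      sorted <=%R (map fst ev),
      (forall i : 'I_(size ev),
         let: (tau, (u, v)) := tnth (in_tuple ev) i in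
         [/\ adj u v, ~~ connect (frel (forest_at ev i)) u v
           & load ev u v tau = c u v]) &
      (* at every time, after processing the merges at that time, no edge
         between different components is tight (hence edges are added as
         soon as they become tight, and the run is complete) *)
      (forall tau, 0 <= tau -> forall u v, adj u v ->
         ~~ connect (frel (F_at ev tau)) u v -> load ev u v tau < c u v)].

Definition actively_connected (ev : seq event) (u v : V) : Prop :=
  exists tau, [/\ 0 <= tau, connect (frel (F_at ev tau)) u v &
    forall s, 0 <= s -> s < tau ->
      active (F_at ev s) s u && active (F_at ev s) s v].

End ShadowMoat.

(* Main.v *)
Require Import Defs.
From HB Require Import structures.
From mathcomp Require Import all_boot all_order all_algebra.
From mathcomp Require Import reals.
From mathcomp Require Import all_classical all_reals all_analysis.
Set Implicit Arguments. Unset Strict Implicit. Unset Printing Implicit Defensive.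
Import Order.TTheory GRing.Theory Num.Theory.
Local Open Scope ring_scope.
Local Open Scope classical_set_scope.
Section Comb.
Variables (R : realType) (V : finType).
Implicit Types (ev : seq (event R V)) (F : seq (V * V)).

Lemma idx_count ev s j : sorted <=%R (map fst ev) -> (j < size ev)%N ->
  (j < n_at ev s)%N = (nth 0 (map fst ev) j <= s).
Proof.
elim: ev j => [//|p l IH] j /= Hs Hj.
have Hsl : sorted <=%R (map fst l) by apply: (path_sorted Hs).
rewrite /n_at /=.
case Hp: (p.1 <= s) => /=.
  case: j Hj => [|j] Hj //=.
  by rewrite add1n ltnS IH.
have Hall := order_path_min (@le_trans _ R) Hs.
have Hc : count (fun p0 : event R V => p0.1 <= s) l = 0%N.
  apply/eqP; rewrite -leqn0 leqNgt -has_count; apply/hasP => [[q Hq Hqs]].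
  have : p.1 <= q.1 by apply: (allP Hall); apply: map_f.
  by move=> Hle; move: Hp; rewrite (le_trans Hle Hqs).
rewrite add0n Hc ltn0; apply/esym/negbTE.
case: j Hj => [|j] Hj /=; first by rewrite Hp.
have Hm : nth 0 (map fst l) j \in map fst l by apply: mem_nth; rewrite size_map.
move: (allP Hall _ Hm) => Hle; apply/negP => Hjs.
by move: Hp; rewrite (le_trans Hle Hjs).
Qed.

Lemma n_at_le ev s : (n_at ev s <= size ev)%N.
Proof. exact: count_size. Qed.

Lemma n_at_idx ev s i : sorted <=%R (map fst ev) -> (i <= size ev)%N ->
  start ev i <= s -> ((i < size ev)%N -> s < nth 0 (map fst ev) i) ->
  n_at ev s = i.
Proof.
move=> Hs Hi Hst Hen.
apply/eqP; rewrite eqn_leq; apply/andP; split.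
  case: (ltnP i (size ev)) => [Hlt|Hge].
    by rewrite leqNgt idx_count // -ltNge; apply: Hen.
  by apply: leq_trans (n_at_le _ _) Hge.
case: i Hi Hst {Hen} => [//|j] Hj Hst.
by rewrite idx_count.
Qed.

Lemma start_n_at ev s : sorted <=%R (map fst ev) -> 0 <= s ->
  start ev (n_at ev s) <= s.
Proof.
move=> Hs s0; case E: (n_at ev s) => [//|j] /=.
have Hj : (j < size ev)%N by rewrite -ltnS -E ltnS; apply: leq_trans (n_at_le ev s); rewrite E.
by rewrite -(idx_count s Hs Hj) E.
Qed.

Lemma end_n_at ev s : sorted <=%R (map fst ev) -> (n_at ev s < size ev)%N ->
  s < nth 0 (map fst ev) (n_at ev s).
Proof.
move=> Hs Hlt; by rewrite ltNge -(idx_count s Hs Hlt) ltnn.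
Qed.

Lemma frel_sym F : symmetric (Defs.frel F).
Proof. by move=> x y; rewrite /Defs.frel orbC. Qed.

Lemma csym F : connect_sym (Defs.frel F).
Proof. exact: (sym_connect_sym (@frel_sym F)). Qed.

Lemma in_comp F x y : (y \in Defs.comp F x) = connect (Defs.frel F) x y.
Proof. by rewrite inE. Qed.

Lemma comp_eq F x y : connect (Defs.frel F) x y -> Defs.comp F x = Defs.comp F y.
Proof.
move=> Hxy; apply/setP => z; rewrite !in_comp; apply/idP/idP => H.
  by apply: connect_trans H; rewrite csym.
exact: connect_trans H.
Qed.

Lemma is_compP F S : reflect (exists x, S = Defs.comp F x) (is_comp F S).
Proof.
apply: (iffP existsP) => [[x /eqP]|[x ->]]; first by exists x.
by exists x.
Qed.

Lemma sum_sep F a b (g : {set V} -> R) :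
  \sum_(S : {set V}) (if (a \in S) != (b \in S) then
     (if is_comp F S then g S else 0) else 0) =
  if connect (Defs.frel F) a b then 0 else g (Defs.comp F a) + g (Defs.comp F b).
Proof.
case: ifP => Hab.
  apply: big1 => S _; case: ifP => // Hsep; case: is_compP => // [[x Sx]].
  move: Hsep; rewrite Sx !in_comp.
  case Hxa: (connect _ x a).
    by rewrite (connect_trans Hxa Hab).
  case Hxb: (connect _ x b) => //.
  by rewrite csym in Hab; rewrite (connect_trans Hxb Hab) in Hxa.
have Hne : Defs.comp F a != Defs.comp F b.
  apply/negP => /eqP E; move: (connect0 (Defs.frel F) b); rewrite -in_comp -E in_comp Hab //.
have Hne' : Defs.comp F b != Defs.comp F a by rewrite eq_sym.
rewrite (bigD1 (Defs.comp F a)) //= (bigD1 (Defs.comp F b)) ?Hne' //=.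
rewrite !in_comp connect0 Hab /= csym Hab /= connect0 /=.
have -> : is_comp F (Defs.comp F a) by apply/is_compP; exists a.
have -> : is_comp F (Defs.comp F b) by apply/is_compP; exists b.
rewrite big1 ?addr0 // => S /andP[HSa HSb].
case: ifP => // Hsep; case: is_compP => // [[x Sx]].
move: Hsep HSa HSb; rewrite Sx !in_comp.
case Hxa: (connect _ x a).
  by rewrite (comp_eq Hxa) eqxx.
case Hxb: (connect _ x b) => //.
by rewrite (comp_eq Hxb) eqxx.
Qed.

End Comb.

Section Meas.
Variables (R : realType) (V : finType) (t : V -> R).
Implicit Types (ev : seq (event R V)) (F : seq (V * V)).

Definition len ev (tau : R) (i : nat) (S : {set V}) : R :=
  Num.max 0 (Num.min (Num.min (end_ ev i tau) tau) (Tmax t S) - start ev i).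

Lemma Tmax_lt S s : 0 <= s -> (s < Tmax t S) = [exists w in S, s < t w].
Proof.
move=> s0; apply/idP/idP.
  apply: contraLR; rewrite negb_exists => /forallP H; rewrite -leNgt.
  apply: bigmax_le => // w wS; move: (H w); rewrite wS /= -leNgt; exact.
case/existsP => w /andP[wS sw]; apply: (lt_le_trans sw).
exact: le_bigmax_cond.
Qed.

Lemma load_eq ev a b tau : load t ev a b tau =
  \sum_(i < (size ev).+1)
    (if connect (Defs.frel (forest_at ev i)) a b then 0
     else len ev tau i (Defs.comp (forest_at ev i) a)
        + len ev tau i (Defs.comp (forest_at ev i) b)).
Proof.
rewrite /load /yval.
rewrite (eq_bigr (fun S : {set V} => \sum_(i < (size ev).+1)
  (if (a \in S) != (b \in S) then (if is_comp (forest_at ev i) S then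
     len ev tau i S else 0) else 0))); last first.
  by move=> S _; case: ifP => _; [apply: eq_bigr|rewrite big1].
rewrite exchange_big /=; apply: eq_bigr => i _.
by rewrite sum_sep.
Qed.

Definition Dset ev a b tau x (i : nat) : set R :=
  if connect (Defs.frel (forest_at ev i)) a b then set0
  else [set` Interval (BLeft (start ev i))
     (BLeft (Num.min (Num.min (end_ ev i tau) tau)
        (Tmax t (Defs.comp (forest_at ev i) x))))].

Definition Bset ev a b tau x : set R :=
  [set s | [/\ 0 <= s, s < tau, ~~ connect (Defs.frel (F_at ev s)) a b
     & active t (F_at ev s) s x]].

Lemma measD ev a b tau x i : lebesgue_measure (Dset ev a b tau x i) =
  (if connect (Defs.frel (forest_at ev i)) a b then 0
   else len ev tau i (Defs.comp (forest_at ev i) x))%:E.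
Proof.
rewrite /Dset; case: ifP => _; first by rewrite measure0.
rewrite lebesgue_measure_itv /= lte_fin /len.
case: ltP => h.
  by rewrite -EFinD; congr EFin; apply/esym/max_idPr; rewrite subr_ge0 ltW.
by congr EFin; apply/esym/max_idPl; rewrite subr_le0.
Qed.

Variable ev : seq (event R V).
Hypothesis Hs : sorted <=%R (map fst ev).
Hypothesis H0 : forall p, p \in ev -> 0 <= p.1.

Lemma start_ge0 i : 0 <= start ev i.
Proof.
case: i => [//|j] /=.
case: (ltnP j (size (map fst ev))) => h; last by rewrite nth_default.
have /mapP[p pin ->] := mem_nth 0 h.
exact: H0.
Qed.

Lemma memD a b tau x i s : Dset ev a b tau x i s ->
  [/\ ~~ connect (Defs.frel (forest_at ev i)) a b, start ev i <= s
      & s < Num.min (Num.min (end_ ev i tau) tau)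
        (Tmax t (Defs.comp (forest_at ev i) x))].
Proof.
rewrite /Dset; case: ifP => // nc; rewrite /= in_itv /= => /andP[h1 h2].
by split.
Qed.

Lemma D_nat a b tau x (i : nat) s : (i <= size ev)%N ->
  Dset ev a b tau x i s -> n_at ev s = i.
Proof.
move=> Hi /memD[_ h1 h2]; apply: n_at_idx => // Hlt.
move: h2; rewrite !lt_min => /andP[/andP[h _] _].
by move: h; rewrite /end_ Hlt.
Qed.

Lemma B_eq a b tau x : Bset ev a b tau x =
  \big[setU/set0]_(i < (size ev).+1) Dset ev a b tau x i.
Proof.
apply/seteqP; split => s.
  case=> s0 stau nc act.
  apply: (@bigsetU_sup _ (n_at ev s)); first by rewrite ltnS n_at_le.
  rewrite /Dset -/(F_at ev s) (negbTE nc) /= in_itv /= start_n_at //=.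
  rewrite !lt_min stau andbT.
  rewrite (Tmax_lt _ s0) andbC -/(active t (F_at ev s) s x) act /=.
  rewrite /end_; case: ifP => h //.
  exact: end_n_at.
rewrite -bigcup_mkord => -[i /= Hi Ds].
have Hn := D_nat (leq_trans Hi (leqnn _)) Ds.
move: Ds => /memD[nc h1 h2].
have s0 : 0 <= s := le_trans (start_ge0 i) h1.
move: h2; rewrite !lt_min => /andP[/andP[_ stau] hT].
split => //; rewrite /F_at Hn //.
by move: hT; rewrite (Tmax_lt _ s0).
Qed.

Lemma measB a b tau x : lebesgue_measure (Bset ev a b tau x) =
  \sum_(i < (size ev).+1)
   (if connect (Defs.frel (forest_at ev i)) a b then 0
    else len ev tau i (Defs.comp (forest_at ev i) x))%:E.
Proof.
rewrite B_eq measure_bigsetU_ord.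
- apply: eq_bigr => i _. exact: measD.
- move=> i; rewrite /Dset; case: ifP => _; [exact: measurable0|exact: measurable_itv].
move=> i j _ _ [s [Di Dj]]; apply/val_inj => /=.
rewrite -(D_nat _ Di) ?(D_nat _ Dj) //.
  by rewrite -ltnS.
by rewrite -ltnS.
Qed.

Lemma load_meas a b tau : (load t ev a b tau)%:E =
  (lebesgue_measure (Bset ev a b tau a) + lebesgue_measure (Bset ev a b tau b))%E.
Proof.
rewrite load_eq !measB -big_split /= -sumEFin; apply: eq_bigr => i _.
by case: ifP => _; rewrite ?adde0 // EFinD.
Qed.

Lemma measurableB a b tau x : measurable (Bset ev a b tau x).
Proof.
rewrite B_eq; apply: bigsetU_measurable => i _.
rewrite /Dset; case: ifP => _; [exact: measurable0|exact: measurable_itv].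
Qed.

End Meas.

Section Main.
Variables (R : realType) (V : finType).
Implicit Types (ev : seq (event R V)) (F : seq (V * V)).

Lemma forest_take ev i : forest_at ev i = take i (map snd ev).
Proof. by rewrite /forest_at map_take. Qed.

Lemma frel_mono ev i j : (i <= j)%N ->
  subrel (Defs.frel (forest_at ev i)) (Defs.frel (forest_at ev j)).
Proof.
move=> hij x y; rewrite /Defs.frel !forest_take -(take_takel _ hij).
by case/orP => h; apply/orP; [left|right]; apply: mem_take h.
Qed.

Lemma conn_mono ev s1 s2 x y : s1 <= s2 ->
  connect (Defs.frel (F_at ev s1)) x y -> connect (Defs.frel (F_at ev s2)) x y.
Proof.
move=> hs; apply: connect_sub => {}x {}y h; apply: connect1.
apply: (frel_mono _ h); apply: sub_count => p /= hp; exact: le_trans hp hs.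
Qed.

Lemma transfer ev ev' s : sorted <=%R (map fst ev) ->
  (forall k, (k < n_at ev s)%N -> forall d,
     connect (Defs.frel (F_at ev' (nth 0 (map fst ev) k)))
       (nth d (map snd ev) k).1 (nth d (map snd ev) k).2) ->
  forall x y, connect (Defs.frel (F_at ev s)) x y ->
     connect (Defs.frel (F_at ev' s)) x y.
Proof.
move=> Hs H.
have key : forall x y, (x, y) \in forest_at ev (n_at ev s) ->
    connect (Defs.frel (F_at ev' s)) x y.
  move=> x y; rewrite forest_take => hin.
  set l := take _ _ in hin.
  have hk : (index (x, y) l < n_at ev s)%N.
    have hl : size l = n_at ev s by rewrite size_takel // size_map n_at_le.
    by rewrite -hl index_mem.
  have hsz : (index (x, y) l < size ev)%N := leq_trans hk (n_at_le ev s).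
  have := H _ hk (x, y).
  have -> : nth (x, y) (map snd ev) (index (x, y) l) = (x, y).
    by rewrite -(nth_take _ hk) nth_index.
  apply: conn_mono.
  by rewrite -idx_count.
apply: connect_sub => x y /orP[] h; first exact: key.
by rewrite csym; apply: key.
Qed.

Lemma act_transfer (t t' : V -> R) F F' s x :
  (forall w, t w <= t' w) ->
  (forall y, connect (Defs.frel F) x y -> connect (Defs.frel F') x y) ->
  active t F s x -> active t' F' s x.
Proof.
move=> tle H /existsP[w /andP[win sw]]; apply/existsP; exists w.
rewrite in_comp H -?in_comp //=.
exact: lt_le_trans sw (tle w).
Qed.

End Main.

Section Final.
Variables (R : realType) (V : finType).

Lemma load_le (t t' : V -> R) (ev ev' : seq (event R V)) a b tau :
  (forall w, t w <= t' w) ->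
  sorted <=%R (map fst ev) -> (forall p, p \in ev -> 0 <= p.1) ->
  sorted <=%R (map fst ev') -> (forall p, p \in ev' -> 0 <= p.1) ->
  (forall s, 0 <= s -> s < tau -> forall x y,
     connect (Defs.frel (F_at ev s)) x y -> connect (Defs.frel (F_at ev' s)) x y) ->
  ~~ connect (Defs.frel (F_at ev' tau)) a b ->
  load t ev a b tau <= load t' ev' a b tau.
Proof.
move=> tle Hs H0 Hs' H0' Hco Hnc.
rewrite -lee_fin (load_meas t Hs H0) (load_meas t' Hs' H0').
have sub : forall x, Bset t ev a b tau x `<=` Bset t' ev' a b tau x.
  move=> x s [s0 stau nc act]; split => //.
    apply/negP => h; move: Hnc; rewrite (conn_mono (ltW stau) h) //.
  apply: act_transfer act => // y; exact: Hco.
apply: leeD; apply: le_measure; rewrite ?inE; try exact: measurableB; exact: sub.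
Qed.

End Final.

Unset Implicit Arguments.
Local Close Scope classical_set_scope.

Theorem mainTheorem5 (R : realType) (V : finType) (adj : rel V)
    (c : V -> V -> R) (t t' : V -> R)
    (adj_sym : symmetric adj) (adj_irr : irreflexive adj)
    (c_sym : forall u v, adj u v -> c u v = c v u)
    (c_ge0 : forall u v, adj u v -> 0 <= c u v)
    (t_ge0 : forall w, 0 <= t w) (t'_ge0 : forall w, 0 <= t' w)
    (t_le : forall w, t w <= t' w)
    (ev ev' : seq (event R V)) (u v : V) :
  is_run t adj c ev -> is_run t' adj c ev' ->
  actively_connected t ev u v -> actively_connected t' ev' u v.
Proof.
move=> [H0 Hs Hev _] [H0' Hs' _ Hcomp'] [tau [tau0 Huv Hact]].
have IND : forall n k, (k < n)%N -> (k < size ev)%N -> forall d,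
     connect (Defs.frel (F_at ev' (nth 0 (map fst ev) k)))
       (nth d (map snd ev) k).1 (nth d (map snd ev) k).2.
  elim=> [//|n IH] k hkn hk d.
  have := Hev (Ordinal hk); rewrite (tnth_nth (0, d)) /=.
  have e1 : nth 0 (map fst ev) k = (nth (0, d) ev k).1 by rewrite (nth_map (0, d)).
  have e2 : nth d (map snd ev) k = (nth (0, d) ev k).2 by rewrite (nth_map (0, d)).
  have hin : nth (0, d) ev k \in ev by apply: mem_nth.
  rewrite e1 e2; case E: (nth (0, d) ev k) hin => [tk [p q]] hin /=.
  rewrite E /= in e1 e2.
  case=> hadj _ hload.
  case Hc: (connect _ p q) => //.
  have tk0 : 0 <= tk := H0 _ hin.
  have := Hcomp' tk tk0 p q hadj (negbT Hc).
  rewrite -hload => hlt.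
  have : load t ev p q tk <= load t' ev' p q tk.
    apply: (load_le t_le Hs H0 Hs' H0') => //; last by rewrite Hc.
    move=> s s0 stk; apply: transfer => // k' hk' d'.
    have hks : (n_at ev s <= k)%N.
      rewrite leqNgt idx_count // -ltNge.
      by rewrite e1.
    apply: (IH k' _ (leq_trans hk' (leq_trans (n_at_le ev s) (leqnn _)))).
    exact: leq_trans hk' (leq_trans hks _).
  by rewrite leNgt hlt.
have ALL : forall s x y, connect (Defs.frel (F_at ev s)) x y ->
    connect (Defs.frel (F_at ev' s)) x y.
  move=> s; apply: transfer => // k hk d.
  have hk' : (k < size ev)%N := leq_trans hk (n_at_le ev s).
  exact: (IND (size ev) k hk' hk').
exists tau; split => //; first exact: ALL.
move=> s s0 stau; case/andP: (Hact s s0 stau) => a1 a2.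
by apply/andP; split; [apply: (act_transfer t_le (ALL s u) a1)|apply: (act_transfer t_le (ALL s v) a2)].
Qed.
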